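(* Assume the action of $H$ on $F$ is open and transitive and that the backward orbits $S_Q^*q$ of $S_Q$ are open for all $q\in Q$. Let $\mathcal C\subset X$ be a control set of $S_X$ and $q\in\pi^{-1}(\mathcal C_0)$. Then for every control set $D\subset E$ of $S_E$ with $D_0\cap E_{\pi(q)}\neq\emptyset$ there is a control set $A^D_q\subset F$ of $S_q$ such that $$D_0\cap E_{\pi(q)}=q\cdot(A^D_q)_0.$$ Furthermore, the map $D\mapsto A^D_q$ is a bijection from the set of control sets $D$ of $S_E$ with $D_0\cap E_{\pi(q)}\neq\emptyset$ onto the set of control sets of $S_q$ on $F$, and it preserves the order: $D\le D'$ if and only if $A^D_q\le A^{D'}_q$.
   Context: Let $X$ be a topological space, $H$ a topological group, $\pi:Q\to X$ a locally trivial principal bundle with structure group $H$ acting on the right ($q\mapsto qa$), and $F$ a topological space with a continuous left $H$-action; the action is open if $Vv$ is open for all open $V\subset H$ and $v\in F$. $E=Q\times_HF$ is the associated bundle (classes $q\cdot v$ with $(qa)\cdot v=q\cdot(av)$), $\pi:E\to X$, and $E_x$ denotes the fiber over $x$. A local map on a space $Y$ is a continuous map $\phi:\mathrm{dom}\,\phi\to Y$ with open domain; a local semigroup is a family of local maps such that $\psi\circ\phi$ (on $\phi^{-1}(\mathrm{dom}\,\psi)$) belongs to it whenever this domain is nonempty. Orbits: $Sy=\{\phi(y):y\in\mathrm{dom}\,\phi,\phi\in S\}$, backward orbits $S^*y=\{z:\exists\phi\in S,\ \phi(z)=y\}$. A point $y$ is self-accessible if $y\in\mathrm{int}(S^*y)$;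 a control set is $D=\{z:z\in\mathrm{cl}(Sy),\ y\in\mathrm{cl}(Sz)\}$ for a self-accessible $y$; its transitivity set $D_0$ is the set of self-accessible points of $D$; $D\le D'$ iff $y'\in Sy$ for some $y\in D_0$, $y'\in D'_0$. A local endomorphism of $Q$ is a continuous $\phi$ with $\mathrm{dom}\,\phi=\pi^{-1}(V)$, $V\subset X$ open, and $\phi(qa)=\phi(q)a$. $S_Q$ is a local semigroup of local endomorphisms of $Q$; it induces local semigroups $S_X=\{\phi_X\}$ on $X$ with $\phi_X(\pi(q))=\pi(\phi(q))$ and $S_E=\{\phi_E\}$ on $E$ with $\phi_E(q\cdot v)=\phi(q)\cdot v$. For $q\in Q$, $S_q=\{a\in H: qa\in S_Qq\}$, a subsemigroup of $H$, acting on $F$. *)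

(* Defs.v *)
From mathcomp Require Import all_boot all_algebra.
From mathcomp Require Import all_classical all_reals all_analysis.
Set Implicit Arguments. Unset Strict Implicit. Unset Printing Implicit Defensive.
Local Open Scope classical_set_scope.

Definition is_topgroup (H : topologicalType) (mul : H -> H -> H) (inv : H -> H)
  (one : H) : Prop :=
  [/\ (forall a b c, mul a (mul b c) = mul (mul a b) c),
      (forall a, mul one a = a /\ mul a one = a),
      (forall a, mul (inv a) a = one /\ mul a (inv a) = one),
      continuous (fun p : H * H => mul p.1 p.2) & continuous inv].

Definition is_right_action (Q H : topologicalType) (mul : H -> H -> H) (one : H)
  (act : Q -> H -> Q) : Prop :=
  [/\ (forall q, act q one = q), (forall q a b, act (act q a) b = act q (mul a b))
    & continuous (fun p : Q * H => act p.1 p.2)].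

Definition is_left_action (H F : topologicalType) (mul : H -> H -> H) (one : H)
  (lact : H -> F -> F) : Prop :=
  [/\ (forall v, lact one v = v), (forall a b v, lact a (lact b v) = lact (mul a b) v)
    & continuous (fun p : H * F => lact p.1 p.2)].

Definition open_action (H F : topologicalType) (lact : H -> F -> F) : Prop :=
  forall (V : set H) (v : F), open V -> open ((fun a => lact a v) @` V).

Definition transitive_action (H F : Type) (lact : H -> F -> F) : Prop :=
  forall v w : F, exists a, lact a v = w.

(* Local triviality: over an open U ∋ x there is an H-equivariant
   homeomorphism pi^-1(U) ≅ U × H, q |-> (pi q, g q), with inverse (y,a) |-> s y a. *)
Definition is_principal_bundle (X Q H : topologicalType) (mul : H -> H -> H)
  (one : H) (act : Q -> H -> Q) (pi : Q -> X) : Prop :=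
  [/\ is_right_action mul one act, continuous pi,
      (forall q a, pi (act q a) = pi q) &
      forall x : X, exists U : set X, [/\ open U, U x &
        exists (g : Q -> H) (s : X -> H -> Q),
        [/\ (forall q, U (pi q) -> s (pi q) (g q) = q),
            (forall y a, U y -> pi (s y a) = y /\ g (s y a) = a),
            {within pi @^-1` U, continuous g},
            {within U `*` setT, continuous (fun p : X * H => s p.1 p.2)} &
            (forall q a, U (pi q) -> g (act q a) = mul (g q) a)]]].

(* E is given together with the class map (q,v) |-> q·v; it is the quotient of
   Q × F by (qa, v) ~ (q, av): the class map is onto, identifies exactly these
   pairs, and E carries the quotient topology. *)
Definition is_associated_bundle (Q H F E : topologicalType) (act : Q -> H -> Q)
  (lact : H -> F -> F) (dot : Q -> F -> E) : Prop :=
  [/\ (forall e : E, exists q v, dot q v = e),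
      (forall q v q' v', dot q v = dot q' v' <->
                         exists a, q = act q' a /\ v' = lact a v) &
      (forall U : set E, open U <-> open ((fun p : Q * F => dot p.1 p.2) @^-1` U))].

Definition assoc_fiber (X Q F E : Type) (pi : Q -> X) (dot : Q -> F -> E) (x : X)
  : set E := [set e | exists q v, pi q = x /\ e = dot q v].

(* a local map: a domain and a map (only its values on the domain matter) *)
Record localmap (Y : Type) := LocalMap { lm_dom : set Y; lm_fun :> Y -> Y }.

Definition is_localmap (Y : topologicalType) (phi : localmap Y) : Prop :=
  open (lm_dom phi) /\ {within lm_dom phi, continuous (lm_fun phi)}.

Definition lm_comp (Y : Type) (psi phi : localmap Y) : localmap Y :=
  LocalMap (lm_dom phi `&` (lm_fun phi) @^-1` lm_dom psi) (lm_fun psi \o lm_fun phi).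

Definition lm_eq (Y : Type) (phi psi : localmap Y) : Prop :=
  lm_dom phi = lm_dom psi /\ forall y, lm_dom phi y -> phi y = psi y.

Definition is_local_semigroup (Y : topologicalType) (S : set (localmap Y)) : Prop :=
  (forall phi, S phi -> is_localmap phi) /\
  forall phi psi, S phi -> S psi -> lm_dom (lm_comp psi phi) !=set0 ->
    exists chi, S chi /\ lm_eq chi (lm_comp psi phi).

Definition is_local_endo (X Q H : topologicalType) (act : Q -> H -> Q) (pi : Q -> X)
  (phi : localmap Q) : Prop :=
  [/\ is_localmap phi,
      (exists V : set X, open V /\ lm_dom phi = pi @^-1` V) &
      (forall q a, lm_dom phi q -> phi (act q a) = act (phi q) a)].

(* orbit of a local semigroup:  ls_orbit S y z  <->  z ∈ S y *)
Definition ls_orbit (Y : Type) (S : set (localmap Y)) (y z : Y) : Prop :=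
  exists phi, S phi /\ lm_dom phi y /\ phi y = z.

Definition induced_SX (X Q : Type) (pi : Q -> X) (SQ : set (localmap Q))
  : set (localmap X) :=
  [set psi | exists phi, SQ phi /\ lm_dom psi = pi @` lm_dom phi /\
             forall q, lm_dom phi q -> psi (pi q) = pi (phi q)].

Definition induced_SE (Q F E : Type) (dot : Q -> F -> E) (SQ : set (localmap Q))
  : set (localmap E) :=
  [set psi | exists phi, SQ phi /\
     lm_dom psi = [set e | exists q v, lm_dom phi q /\ e = dot q v] /\
     forall q v, lm_dom phi q -> psi (dot q v) = dot (phi q) v].

Definition Sq (Q H : Type) (act : Q -> H -> Q) (SQ : set (localmap Q)) (q : Q)
  : set H := [set a | ls_orbit SQ q (act q a)].

Definition sg_orbit (H F : Type) (lact : H -> F -> F) (T : set H) (v w : F) : Prop :=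
  exists a, T a /\ lact a v = w.

Section ControlSets.
Context (Y : topologicalType) (O : Y -> Y -> Prop).

Definition orbit (y : Y) : set Y := [set z | O y z].
Definition backorbit (y : Y) : set Y := [set z | O z y].
Definition self_accessible (y : Y) : Prop := (backorbit y)° y.

Definition control_set_of (y : Y) : set Y :=
  [set z | closure (orbit y) z /\ closure (orbit z) y].

Definition is_control_set (D : set Y) : Prop :=
  exists y, self_accessible y /\ D = control_set_of y.

Definition transitivity_set (D : set Y) : set Y :=
  [set z | D z /\ self_accessible z].

Definition cs_le (D D' : set Y) : Prop :=
  exists y y', transitivity_set D y /\ transitivity_set D' y' /\ O y y'.
End ControlSets.

(* Main.v *)
Require Import Defs.
From mathcomp Require Import all_boot all_algebra.
From mathcomp Require Import all_classical all_reals all_analysis.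
Set Implicit Arguments. Unset Strict Implicit.
Local Open Scope classical_set_scope.

Lemma my_pc_cont (A B C : topologicalType) (f : A -> B) (g : A -> C) :
  continuous f -> continuous g -> continuous (fun x => (f x, g x)).
Proof. move=> cf cg x. apply: cvg_pair; [exact: cf| exact: cg]. Qed.
Lemma my_cst_cont (A B : topologicalType) (b : B) : continuous (fun _ : A => b).
Proof. move=> x; exact: cvg_cst. Qed.
Lemma my_fst_cont (A B : topologicalType) : continuous (fun p : A * B => p.1).
Proof. move=> x; exact: cvg_fst. Qed.
Lemma my_snd_cont (A B : topologicalType) : continuous (fun p : A * B => p.2).
Proof. move=> x; exact: cvg_snd. Qed.
Lemma my_comp_cont (A B C : topologicalType) (f : A -> B) (g : B -> C) :
  continuous f -> continuous g -> continuous (fun x => g (f x)).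
Proof. move=> cf cg x. exact: (continuous_comp (cf x) (cg (f x))). Qed.

Section CS.
Context (Y : topologicalType) (O : Y -> Y -> Prop).
Hypothesis Otr : forall a b c, O a b -> O b c -> O a c.

Lemma sa_refl y : self_accessible O y -> O y y.
Proof. by move=> /interior_subset. Qed.

Lemma sa_closure y z : self_accessible O y -> closure (Defs.orbit O z) y -> O z y.
Proof. move=> Hy /(_ _ Hy) [w [Ozw Owy]]; exact: Otr Ozw Owy. Qed.

Lemma cs_mem y z : self_accessible O y -> self_accessible O z ->
  (control_set_of O y z <-> O y z /\ O z y).
Proof.
move=> sy sz; split.
  by move=> [h1 h2]; split; apply: sa_closure.
by move=> [h1 h2]; split; apply: subset_closure.
Qed.

Lemma cs_eq y z : self_accessible O y -> self_accessible O z -> O y z -> O z y ->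
  control_set_of O y = control_set_of O z.
Proof.
have key : forall y z, self_accessible O y -> self_accessible O z -> O y z -> O z y ->
   control_set_of O y `<=` control_set_of O z.
  move=> y0 z0 sy sz Oyz Ozy w [h1 h2]; split.
    apply: (closureS _ h1) => u /= Ou; exact: Otr Ozy Ou.
  apply: subset_closure => /=; apply: Otr Oyz.
  exact: sa_closure.
move=> sy sz Oyz Ozy; apply/seteqP; split; exact: key.
Qed.

Lemma cs_trans D z : is_control_set O D -> transitivity_set O D z ->
  D = control_set_of O z.
Proof.
case=> y [sy ->] [Dz sz].
have [Oyz Ozy] := (cs_mem sy sz).1 Dz.
exact: cs_eq.
Qed.

Lemma cs_self y : self_accessible O y -> control_set_of O y y.
Proof. by move=> sy; apply/(cs_mem sy sy); split; apply: sa_refl. Qed.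
End CS.
Section Bundle.
Context (X Q H F E : topologicalType)
  (mul : H -> H -> H) (inv : H -> H) (one : H)
  (act : Q -> H -> Q) (pi : Q -> X) (lact : H -> F -> F) (dot : Q -> F -> E)
  (SQ : set (localmap Q))
  (HG : is_topgroup mul inv one)
  (HP : is_principal_bundle mul one act pi)
  (HF : is_left_action mul one lact)
  (HE : is_associated_bundle act lact dot)
  (HSQ : is_local_semigroup SQ)
  (HSQendo : forall phi, SQ phi -> is_local_endo act pi phi)
  (Hback : forall q : Q, open (backorbit (ls_orbit SQ) q))
  (q : Q).

Let OE := ls_orbit (induced_SE dot SQ).
Let OF := sg_orbit lact (Sq act SQ q).

Lemma mulA a b c : mul a (mul b c) = mul (mul a b) c.
Proof. by case: HG. Qed.
Lemma mul1g a : mul one a = a. Proof. by case: HG => _ h _ _ _; case: (h a). Qed.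
Lemma mulg1 a : mul a one = a. Proof. by case: HG => _ h _ _ _; case: (h a). Qed.
Lemma mulVg a : mul (inv a) a = one. Proof. by case: HG => _ _ h _ _; case: (h a). Qed.
Lemma mulgV a : mul a (inv a) = one. Proof. by case: HG => _ _ h _ _; case: (h a). Qed.
Lemma inv_uniq z w : mul z w = one -> z = inv w.
Proof.
move=> h; rewrite -(mulg1 z) -(mulgV w) mulA h mul1g //.
Qed.
Lemma invK a : inv (inv a) = a.
Proof. by apply/esym/inv_uniq; rewrite mulgV. Qed.
Lemma invM a c : inv (mul a c) = mul (inv c) (inv a).
Proof.
apply/esym/inv_uniq.
by rewrite -mulA (mulA (inv a)) mulVg mul1g mulVg.
Qed.

Lemma act1 x : act x one = x. Proof. by case: HP => -[h _ _] _ _ _. Qed.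
Lemma actM x a b : act (act x a) b = act x (mul a b). Proof. by case: HP => -[_ h _] _ _ _. Qed.
Lemma actC : continuous (fun p : Q * H => act p.1 p.2). Proof. by case: HP => -[_ _ h] _ _ _. Qed.
Lemma pi_act x a : pi (act x a) = pi x. Proof. by case: HP. Qed.
Lemma lact1 v : lact one v = v. Proof. by case: HF. Qed.
Lemma lactM a b v : lact a (lact b v) = lact (mul a b) v. Proof. by case: HF. Qed.
Lemma lactC : continuous (fun p : H * F => lact p.1 p.2). Proof. by case: HF. Qed.
Lemma dot_surj e : exists x v, dot x v = e. Proof. by case: HE. Qed.
Lemma dot_eq x v x' v' : dot x v = dot x' v' <-> exists a, x = act x' a /\ v' = lact a v.
Proof. by case: HE. Qed.
Lemma dot_open U : open U <-> open ((fun p : Q * F => dot p.1 p.2) @^-1` U).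
Proof. by case: HE. Qed.
Lemma dot_act x a v : dot (act x a) v = dot x (lact a v).
Proof. by apply/dot_eq; exists a. Qed.

Lemma dom_sat phi x y : SQ phi -> lm_dom phi x -> pi y = pi x -> lm_dom phi y.
Proof.
move=> /HSQendo [_ [V [_ ->]] _] /= hx e; by rewrite /preimage /= e.
Qed.
Lemma endo phi x a : SQ phi -> lm_dom phi x -> phi (act x a) = act (phi x) a.
Proof. by move=> /HSQendo [_ _ h] /h. Qed.

Lemma SQ_trans x y z : ls_orbit SQ x y -> ls_orbit SQ y z -> ls_orbit SQ x z.
Proof.
move=> [phi [Sphi [dx <-]]] [psi [Spsi [dy <-]]].
have [chi [Schi [Hd Hv]]] := HSQ.2 phi psi Sphi Spsi (ex_intro _ x (conj dx dy)).
exists chi; split => //.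
have hx : lm_dom (lm_comp psi phi) x by split.
by rewrite Hd; split => //; rewrite Hv // Hd.
Qed.

Lemma SQ_act x y a : ls_orbit SQ x y -> ls_orbit SQ (act x a) (act y a).
Proof.
move=> [phi [Sphi [dx <-]]]; exists phi; split => //; split.
  by apply: (dom_sat Sphi dx); rewrite pi_act.
exact: endo.
Qed.

Lemma wd phi x v x' v' : SQ phi -> lm_dom phi x -> dot x v = dot x' v' ->
  dot (phi x) v = dot (phi x') v'.
Proof.
move=> Sphi dx /dot_eq [a [ex ev]].
have dx' : lm_dom phi x' by apply: (dom_sat Sphi dx); rewrite ex pi_act.
by rewrite ex endo // dot_act ev.
Qed.

Lemma SE_fwd x y w : ls_orbit SQ x y -> OE (dot x w) (dot y w).
Proof.
move=> [phi [Sphi [dx <-]]].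
pose f := fun e => match pselect (exists p : Q * F, lm_dom phi p.1 /\ e = dot p.1 p.2) with
  | left h => let p := projT1 (cid h) in dot (phi p.1) p.2
  | right _ => e end.
have fE : forall x0 v0, lm_dom phi x0 -> f (dot x0 v0) = dot (phi x0) v0.
  move=> x0 v0 d0; rewrite /f; case: pselect => [h|[]]; last by exists (x0, v0).
  case: (cid h) => p [dp ep] /=.
  by apply: wd => //.
exists (LocalMap [set e | exists x0 v0, lm_dom phi x0 /\ e = dot x0 v0] f).
split; last by split => //=; [exists x, w | rewrite fE].
by exists phi; split => //; split.
Qed.

Lemma SE_inv x w e : OE (dot x w) e -> exists y, ls_orbit SQ x y /\ e = dot y w.
Proof.
move=> [psi [[phi [Sphi [Hd Hv]]] [dom <-]]].
move: dom; rewrite Hd => -[x0 [v0 [d0 /dot_eq [a [ex _]]]]].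
have dx : lm_dom phi x by apply: (dom_sat Sphi d0); rewrite ex pi_act.
by exists (phi x); split; [exists phi | rewrite Hv].
Qed.

Lemma OE_trans e1 e2 e3 : OE e1 e2 -> OE e2 e3 -> OE e1 e3.
Proof.
have [x [w <-]] := dot_surj e1.
move=> /SE_inv [y [xy ->]] /SE_inv [z [yz ->]].
apply: SE_fwd; exact: SQ_trans xy yz.
Qed.

Lemma OF_trans v w u : OF v w -> OF w u -> OF v u.
Proof.
move=> [a [Sa <-]] [b [Sb <-]]; exists (mul b a); split; last by rewrite lactM.
rewrite /Sq /=; apply: SQ_trans Sa _.
by rewrite -actM; apply: SQ_act.
Qed.

Lemma K v w : OE (dot q v) (dot q w) <-> OF v w.
Proof.
split.
  move=> /SE_inv [y [qy /esym /dot_eq [a [ey ew]]]].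
  by exists a; split; [rewrite /Sq /= -ey | rewrite ew].
move=> [a [Sa <-]]; rewrite -dot_act; exact: SE_fwd.
Qed.

Lemma dotq_cont : continuous (dot q).
Proof.
have c : continuous (fun p : Q * F => dot p.1 p.2) by apply/continuousP => A /dot_open.
have ci : continuous (fun w : F => w) by move=> x; exact: cvg_id.
have := my_comp_cont (my_pc_cont (@my_cst_cont F Q q) ci) c; by [].
Qed.

Lemma SA_fwd v : self_accessible OE (dot q v) -> self_accessible OF v.
Proof.
move=> h.
have h2 : nbhs v (dot q @^-1` backorbit OE (dot q v)) := dotq_cont h.
by apply: filterS h2 => w hw; apply/K; exact: hw.
Qed.

Lemma SA_bwd v : self_accessible OF v -> self_accessible OE (dot q v).
Proof.
move=> sv.
set W := (backorbit OF v)°.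
set U := backorbit (ls_orbit SQ) q.
set O := [set p : Q * F | exists c, U (act p.1 c) /\ W (lact (inv c) p.2)].
have oO : open O.
  have -> : O = \bigcup_(c in setT) ((fun p : Q * F => act p.1 c) @^-1` U `&`
                                   (fun p : Q * F => lact (inv c) p.2) @^-1` W).
    by apply/seteqP; split => p /= [c]; [move=> h; exists c | move=> _ h; exists c].
  apply: bigcup_open => c _; apply: openI.
    apply: (proj1 (continuousP _) _ _ (Hback q)).
    have := my_comp_cont (my_pc_cont (@my_fst_cont Q F) (@my_cst_cont (Q * F)%type H c)) actC; by [].
  apply: (proj1 (continuousP _) _ _ (@open_interior _ _)).
  have := my_comp_cont (my_pc_cont (@my_cst_cont (Q * F)%type H (inv c)) (@my_snd_cont Q F)) lactC; by [].
set N := [set e | exists p, O p /\ e = dot p.1 p.2].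
have oN : open N.
  apply/dot_open.
  have -> : (fun p : Q * F => dot p.1 p.2) @^-1` N = O; last by [].
  apply/seteqP; split => p /=; last by move=> Op; exists p.
  move=> [p' [[c [Uc Wc]] /dot_eq [a [e1 e2]]]].
  exists (mul (inv a) c); split.
    by rewrite e1 actM mulA mulgV mul1g.
  by rewrite invM invK -lactM -e2.
have Ne : N (dot q v).
  have [a [Sa Ha]] := sa_refl sv.
  exists (q, v); split => //; exists (inv a); split => /=.
    have := SQ_act (inv a) Sa; by rewrite actM mulgV act1.
  by rewrite invK Ha.
have sub : N `<=` backorbit OE (dot q v).
  move=> _ [p [[c [Uc Wc]] ->]].
  have e : dot p.1 p.2 = dot (act p.1 c) (lact (inv c) p.2)
    by rewrite dot_act lactM mulgV lact1.
  rewrite /backorbit /= e.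
  apply: OE_trans (SE_fwd _ Uc) _.
  by apply/K; apply: interior_subset Wc.
rewrite /self_accessible /interior /=.
apply: filterS sub _; apply: open_nbhs_nbhs; by split.
Qed.

Lemma FIB e : assoc_fiber pi dot (pi q) e -> exists w, e = dot q w.
Proof.
move=> [x [v [px ->]]].
case: HP => _ _ _ /(_ (pi q)) [U [_ Uq [g [s [h1 h2 _ _ h5]]]]].
set c := mul (inv (g q)) (g x).
exists (lact c v); rewrite -dot_act; congr dot.
have Ux : U (pi (act q c)) by rewrite pi_act.
have e1 : g (act q c) = g x by rewrite h5 // /c mulA mulgV mul1g.
have Ux' : U (pi x) by rewrite px.
rewrite -(h1 _ Ux) -(h1 _ Ux') pi_act e1 px //.
Qed.

Definition AF (D : set E) : set F :=
  [set w | exists v, transitivity_set OE D (dot q v) /\ control_set_of OF v w].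

Lemma mutual v w : transitivity_set OE (control_set_of OE (dot q v)) (dot q w) ->
  self_accessible OF v -> OF v w /\ OF w v.
Proof.
move=> [Dw sw] sv.
have := (cs_mem OE_trans (SA_bwd sv) sw).1 Dw.
by case=> /K h1 /K h2.
Qed.

Lemma AD D v : is_control_set OE D -> transitivity_set OE D (dot q v) ->
  AF D = control_set_of OF v.
Proof.
move=> cD Dv; have sv := SA_fwd Dv.2.
apply/seteqP; split; last by move=> w h; exists v.
move=> w [v' [Dv' h]].
suff -> : control_set_of OF v = control_set_of OF v' by [].
have sv' := SA_fwd Dv'.2.
rewrite (cs_trans OE_trans cD Dv) in Dv'.
have [h1 h2] := mutual Dv' sv.
exact (cs_eq OF_trans sv sv' h1 h2).
Qed.

Lemma P1 D v : is_control_set OE D -> transitivity_set OE D (dot q v) ->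
  transitivity_set OE D `&` assoc_fiber pi dot (pi q)
    = dot q @` transitivity_set OF (control_set_of OF v).
Proof.
move=> cD Dv; have sv := SA_fwd Dv.2.
have eD := cs_trans OE_trans cD Dv.
apply/seteqP; split.
  move=> e [De /FIB [w ew]]; subst e.
  have sw := SA_fwd De.2.
  exists w => //; split => //.
  rewrite eD in De.
  by apply/(cs_mem OF_trans sv sw); apply: mutual.
move=> _ [w [cw sw] <-].
have [h1 h2] := (cs_mem OF_trans sv sw).1 cw.
split; last by exists q, w.
split; last exact: SA_bwd.
rewrite eD; apply/(cs_mem OE_trans (SA_bwd sv) (SA_bwd sw)).
by split; apply/K.
Qed.

Lemma good_ex D : transitivity_set OE D `&` assoc_fiber pi dot (pi q) !=set0 ->
  exists v, transitivity_set OE D (dot q v).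
Proof. by move=> [e [De /FIB [w ew]]]; exists w; rewrite -ew. Qed.


Lemma main_aux :
  let good (D : set E) := is_control_set OE D /\
        transitivity_set OE D `&` assoc_fiber pi dot (pi q) !=set0 in
  exists A : set E -> set F,
    [/\ (forall D, good D ->
           is_control_set OF (A D) /\
           transitivity_set OE D `&` assoc_fiber pi dot (pi q)
             = dot q @` transitivity_set OF (A D)),
        (forall D D', good D -> good D' -> A D = A D' -> D = D'),
        (forall B, is_control_set OF B -> exists D, good D /\ A D = B) &
        (forall D D', good D -> good D' -> (cs_le OE D D' <-> cs_le OF (A D) (A D')))].
Proof.
move=> good; exists AF; split.
- move=> D [cD /good_ex [v Dv]].
  rewrite (AD cD Dv) (P1 cD Dv); split => //.
  by exists v; split => //; exact: SA_fwd Dv.2.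
- move=> D D' [cD /good_ex [v Dv]] [cD' /good_ex [v' Dv']].
  rewrite (AD cD Dv) (AD cD' Dv') => eA.
  have sv := SA_fwd Dv.2; have sv' := SA_fwd Dv'.2.
  have := cs_self OF_trans sv'; rewrite -eA => /(cs_mem OF_trans sv sv') [h1 h2].
  rewrite (cs_trans OE_trans cD Dv) (cs_trans OE_trans cD' Dv').
  by apply: (cs_eq OE_trans (SA_bwd sv) (SA_bwd sv')); apply/K.
- move=> B [v [sv ->]].
  have sE := SA_bwd sv.
  have Dv : transitivity_set OE (control_set_of OE (dot q v)) (dot q v)
    by split => //; exact (cs_self OE_trans sE).
  have cD : is_control_set OE (control_set_of OE (dot q v)) by exists (dot q v).
  exists (control_set_of OE (dot q v)); split; last exact: AD cD Dv.
  by split => //; exists (dot q v); split => //; exists q, v.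
- move=> D D' [cD /good_ex [v Dv]] [cD' /good_ex [v' Dv']].
  have sv := SA_fwd Dv.2; have sv' := SA_fwd Dv'.2.
  rewrite (AD cD Dv) (AD cD' Dv'); split.
    move=> [y [y' [Dy [Dy' Oyy']]]].
    have eD := cs_trans OE_trans cD Dv; have eD' := cs_trans OE_trans cD' Dv'.
    have [h1 _] : OE (dot q v) y /\ OE y (dot q v).
      by apply/(cs_mem OE_trans Dv.2 Dy.2); rewrite -eD; exact: Dy.1.
    have [_ h2] : OE (dot q v') y' /\ OE y' (dot q v').
      by apply/(cs_mem OE_trans Dv'.2 Dy'.2); rewrite -eD'; exact: Dy'.1.
    exists v, v'; split; first by split => //; exact (cs_self OF_trans sv).
    split; first by split => //; exact (cs_self OF_trans sv').
    by apply/K; apply: OE_trans (OE_trans h1 Oyy') h2.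
  move=> [w [w' [Dw [Dw' Oww']]]].
  have := P1 cD Dv; have := P1 cD' Dv'.
  move=> /seteqP [_ s2] /seteqP [_ s1].
  have [e1 _] := s1 (dot q w) (ex_intro2 _ _ w Dw erefl).
  have [e2 _] := s2 (dot q w') (ex_intro2 _ _ w' Dw' erefl).
  by exists (dot q w), (dot q w'); split => //; split => //; apply/K.
Qed.

End Bundle.

Theorem mainTheorem12
  (X Q H F E : topologicalType)
  (mul : H -> H -> H) (inv : H -> H) (one : H)
  (act : Q -> H -> Q) (pi : Q -> X) (lact : H -> F -> F) (dot : Q -> F -> E)
  (SQ : set (localmap Q))
  (HG : is_topgroup mul inv one)
  (HP : is_principal_bundle mul one act pi)
  (HF : is_left_action mul one lact)
  (HE : is_associated_bundle act lact dot)
  (HSQ : is_local_semigroup SQ)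
  (HSQendo : forall phi, SQ phi -> is_local_endo act pi phi)
  (Hopen : open_action lact) (Htrans : transitive_action lact)
  (Hback : forall q : Q, open (backorbit (ls_orbit SQ) q))
  (C : set X) (HC : is_control_set (ls_orbit (induced_SX pi SQ)) C)
  (q : Q) (Hq : transitivity_set (ls_orbit (induced_SX pi SQ)) C (pi q)) :
  let OE := ls_orbit (induced_SE dot SQ) in
  let OF := sg_orbit lact (Sq act SQ q) in
  let good (D : set E) := is_control_set OE D /\
        transitivity_set OE D `&` assoc_fiber pi dot (pi q) !=set0 in
  exists A : set E -> set F,
    [/\ (forall D, good D ->
           is_control_set OF (A D) /\
           transitivity_set OE D `&` assoc_fiber pi dot (pi q)
             = dot q @` transitivity_set OF (A D)),
        (forall D D', good D -> good D' -> A D = A D' -> D = D'),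
        (forall B, is_control_set OF B -> exists D, good D /\ A D = B) &
        (forall D D', good D -> good D' -> (cs_le OE D D' <-> cs_le OF (A D) (A D')))].
Proof.
exact (main_aux HG HP HF HE HSQ HSQendo Hback q).
Qed.
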